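(* Let $m\in\mathbb{N}$. Then there is a set $\Gamma(m)\subset(0,1]^{m}$ with the following properties: (i) $\sharp\Gamma(m)\leq 2^{5m/2}$. (ii) For every $\{\varepsilon_{i}\}_{i=1}^{m}\in\Gamma(m)$, the numbers $m\varepsilon_{i}$ are positive integers for all $i\in\{1,\dots,m\}$, $\sum_{i=1}^{m}\varepsilon_{i}\leq 3$, and for all $t>0$, $\sharp\{i\in\{1,\dots,m\}:\varepsilon_{i}\geq t\}\leq 2/t$. (iii) For every sequence $\{\alpha_{i}\}_{i=1}^{m}$ with each $\alpha_{i}\in[0,1]$ and $\sum_{i=1}^{m}\alpha_{i}=1$ there is $\{\varepsilon_{i}\}_{i=1}^{m}\in\Gamma(m)$ such that $\alpha_{i}\leq\varepsilon_{i}$ for all $i\in\{1,\dots,m\}$.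
   Context: $\sharp A$ denotes the cardinality of a finite set $A$. *)

(* Defs.v *)
From mathcomp Require Import all_boot all_order all_algebra.
From mathcomp Require Import all_classical all_reals all_analysis.
Set Implicit Arguments. Unset Strict Implicit. Unset Printing Implicit Defensive.

(* Main.v *)
Require Import Defs.
From mathcomp Require Import all_boot all_order all_algebra.
From mathcomp Require Import all_classical all_reals all_analysis.
From mathcomp Require Import zify.
From Stdlib Require Import Lia.
Import Order.TTheory GRing.Theory Num.Theory.

Lemma geom_bound n : (\sum_(v < n) 2 ^ (n - v) < 2 ^ n.+1)%N.
Proof.
elim: n => [|n IH]; first by rewrite big_ord0.
rewrite big_ord_recl /= subn0.
under eq_bigr => i _ do rewrite /bump /= add1n subSS.
rewrite (expnS 2 n.+1) mul2n -addnn ltn_add2l.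
exact: IH.
Qed.

Definition Pset n := [pred c : {ffun 'I_n -> 'I_n} | (\sum_i (c i : nat) <= n)%N].

Lemma card_Pset n : (#|Pset n| <= 2 ^ (2 * n))%N.
Proof.
have key : (#|Pset n| * 2 ^ (n * n - n) <= 2 ^ (n * n + n))%N.
  apply: (@leq_trans (\sum_(c : {ffun 'I_n -> 'I_n}) \prod_(i < n) 2 ^ (n - c i))).
    rewrite -sum1_card big_distrl /= [X in (_ <= X)%N](bigID (Pset n)) /=.
    apply: leq_trans (leq_addr _ _).
    apply: leq_sum => c Pc; rewrite mul1n -expn_sum leq_pexp2l //.
    have E : (\sum_(i < n) (n - c i) + \sum_i (c i : nat) = n * n)%N.
      rewrite -big_split /=.
      rewrite (eq_bigr (fun _ => n)); last by move=> i _; rewrite subnK // ltnW.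
      by rewrite sum_nat_const card_ord.
    move: Pc; rewrite inE => Pc. move: E Pc. set a := \sum_(i < n) _. set b := \sum_(i < n) _. lia.
  rewrite -(bigA_distr_bigA (fun (i : 'I_n) (j : 'I_n) => 2 ^ (n - j))%N) /=.
  have -> : (n * n + n = n.+1 * n)%N by lia.
  rewrite expnM -[X in (_ <= _ ^ X)%N](card_ord n) -prod_nat_const.
  apply: leq_prod => i _; rewrite expnS mul2n.
  have := geom_bound n. rewrite expnS mul2n => h.
  exact: ltnW.
rewrite -(@leq_pmul2r (2 ^ (n * n - n))) ?expn_gt0 // -expnD.
apply: (leq_trans key); rewrite leq_exp2l //.
nia.
Qed.

Local Open Scope ring_scope.

Definition toE (R : realType) n (c : {ffun 'I_n.+1 -> 'I_n.+1}) : {ffun 'I_n.+1 -> R} :=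
  [ffun i => ((c i).+1)%:R / (n.+1)%:R].

Theorem lemma2p2 (R : realType) (m : nat) :
  exists Gamma : seq {ffun 'I_m -> R},
    [/\ uniq Gamma,
        (* Gamma is a subset of (0,1]^m *)
        (forall e, e \in Gamma -> forall i : 'I_m, 0 < e i <= 1),
        (* (i) *)
        (size Gamma)%:R <= (2 : R) `^ ((5 * m)%:R / 2),
        (* (ii) *)
        (forall e, e \in Gamma ->
           [/\ (forall i : 'I_m, exists k : nat, (0 < k)%N /\ m%:R * e i = k%:R),
               \sum_(i < m) e i <= 3
             & forall t : R, 0 < t -> (#|[pred i : 'I_m | t <= e i]|)%:R <= 2 / t])
      & (* (iii) *)
        (forall a : {ffun 'I_m -> R},
           (forall i : 'I_m, 0 <= a i <= 1) -> \sum_(i < m) a i = 1 ->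
           exists2 e, e \in Gamma & forall i : 'I_m, a i <= e i)].
Proof.
case: m => [|n].
  exists [::]; split => //; first by rewrite powR_ge0.
  by move=> a _; rewrite big_ord0 => /eqP; rewrite eq_sym oner_eq0.
set M := n.+1.
have M0 : 0 < M%:R :> R by rewrite ltr0n.
have M0' : M%:R != 0 :> R by rewrite gt_eqF.
exists (map (@toE R n) (enum (Pset M))); split.
- rewrite map_inj_uniq ?enum_uniq // => c d /ffunP H; apply/ffunP => i.
  have := H i; rewrite !ffunE => /(mulIf (invr_neq0 M0'))/eqP.
  by rewrite eqr_nat eqSS => /eqP /val_inj.
- move=> e /mapP [c _ ->] i; rewrite ffunE divr_gt0 ?ltr0n //=.
  by rewrite ler_pdivrMr // mul1r ler_nat ltn_ord.
- rewrite size_map -cardE.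
  apply: (@le_trans _ _ (2 ^ (2 * M))%:R); first by rewrite ler_nat card_Pset.
  rewrite natrX -powR_mulrn ?ler0n // ler_powR ?ler1n //.
  rewrite ler_pdivlMr // -natrM ler_nat; lia.
- move=> e /mapP [c Pc ->]; rewrite mem_enum inE in Pc.
  have sumE : \sum_(i < M) toE R n c i <= 2.
    under eq_bigr => i _ do rewrite ffunE.
    rewrite -mulr_suml -natr_sum ler_pdivrMr // -natrM ler_nat.
    under eq_bigr => i _ do rewrite -addn1.
    by rewrite big_split /= sum1_card card_ord mul2n -addnn leq_add2r.
  have ge0 : forall i, 0 <= toE R n c i by move=> i; rewrite ffunE divr_ge0.
  split.
  + move=> i; exists (c i).+1; split => //.
    by rewrite ffunE mulrC divfK.
  + exact: le_trans sumE (ler_nat _ 2 3).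
  + move=> t t0; rewrite ler_pdivlMr //.
    apply: le_trans sumE.
    have -> : #|[pred i : 'I_M | t <= toE R n c i]|%:R * t = \sum_(i in [pred i : 'I_M | t <= toE R n c i]) t.
      by rewrite sumr_const mulr_natl.
    rewrite [X in _ <= X](bigID [pred i : 'I_M | t <= toE R n c i]) /=.
    rewrite -[X in X <= _]addr0; apply: lerD; last exact: sumr_ge0.
    by apply: ler_sum => i; rewrite inE.
- move=> a a01 a1.
  pose c : {ffun 'I_M -> 'I_M} := [ffun i => inord (minn (Num.truncn (M%:R * a i)) n)].
  have cE : forall i, (c i : nat) = minn (Num.truncn (M%:R * a i)) n.
    by move=> i; rewrite ffunE inordK // ltnS geq_minr.
  have aM : forall i, 0 <= M%:R * a i.
    by move=> i; have /andP[] := a01 i => h _; rewrite mulr_ge0 ?ler0n.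
  exists (toE R n c).
    apply: map_f; rewrite mem_enum inE.
    rewrite -(ler_nat R) natr_sum.
    apply: (@le_trans _ _ (\sum_(i < M) M%:R * a i)).
      apply: ler_sum => i _; rewrite cE.
      have /andP[h _] := truncn_itv (aM i).
      by apply: le_trans h; rewrite ler_nat geq_minl.
    by rewrite -mulr_sumr a1 mulr1.
  move=> i; rewrite ffunE cE.
  case: (leqP (Num.truncn (M%:R * a i)) n) => h.
    rewrite ler_pdivlMr // mulrC.
    exact: ltW (truncnS_gt (M%:R * a i)).
  rewrite divff ?pnatr_eq0 //.
  by have /andP[] := a01 i.
Qed.
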